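(* Let $\mathcal W$ be a monotonic game on $[n]$ and $i\neq j$ players. Then the game $\hat{\mathcal W}$ obtained by imposing an asymmetric reciprocal strong YES-quarrel between $i$ and $j$ is quasi-monotonic (i.e. 1-monotonic).
   Context: Players are $[n]=\{1,\dots,n\}$. A binary voting game on $[n]$ is identified with its collection $\mathcal W\subseteq 2^{[n]}$ of winning sets ($S\in\mathcal W$ means the division in which exactly the members of $S$ vote YES has outcome YES). It is monotonic if $T\subseteq S$ and $T\in\mathcal W$ imply $S\in\mathcal W$. For an integer $k\ge0$, a game $\mathcal W$ is $k$-monotonic if for every $S\subseteq[n]$ with $S\notin\mathcal W$ and every proper subset $T\subsetneq S$ there exists $K$ with $|K|\le k$ such that $T\setminus K\notin\mathcal W$; quasi-monotonic means 1-monotonic. Asymmetric reciprocal strong YES-quarrel between $i$ and $j$: for every $S\subseteq[n]\setminus\{i,j\}$, $S\cup\{i,j\}\in\hat{\mathcal W}\iff S\in\mathcal W$; $S\cup\{i\}\in\hat{\mathcal W}\iff S\cup\{i\}\in\mathcal W$; $S\cup\{j\}\in\hat{\mathcal W}\iff S\cup\{j\}\in\mathcal W$; $S\in\hat{\mathcal W}\iff S\in\mathcal W$. *)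

(* Defs.v *)
(* Players [n] are represented by 'I_n (0-indexed). *)
From mathcomp Require Import all_boot.
Set Implicit Arguments. Unset Strict Implicit. Unset Printing Implicit Defensive.

(* A binary voting game on [n]: its collection of winning sets. *)
Definition game (n : nat) := {set {set 'I_n}}.

Definition monotonic n (W : game n) : Prop :=
  forall S T : {set 'I_n}, T \subset S -> T \in W -> S \in W.

Definition k_monotonic n (k : nat) (W : game n) : Prop :=
  forall S : {set 'I_n}, S \notin W ->
  forall T : {set 'I_n}, T \proper S ->
  exists K : {set 'I_n}, #|K| <= k /\ (T :\: K) \notin W.

Definition quasi_monotonic n (W : game n) : Prop := k_monotonic 1 W.

Definition asym_recip_strong_yes_quarrel n (W Wh : game n) (i j : 'I_n) : Prop :=
  forall S : {set 'I_n}, i \notin S -> j \notin S ->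
    [/\ (i |: (j |: S) \in Wh) = (S \in W),
        (i |: S \in Wh) = (i |: S \in W),
        (j |: S \in Wh) = (j |: S \in W) &
        (S \in Wh) = (S \in W)].

(* Main.v *)
Require Import Defs.
From mathcomp Require Import all_boot.

Lemma whE (n : nat) (W Wh : game n) (i j : 'I_n) :
  i != j -> asym_recip_strong_yes_quarrel W Wh i j ->
  forall X : {set 'I_n}, (X \in Wh) =
    if (i \in X) && (j \in X) then (X :\: [set i; j]) \in W else X \in W.
Proof.
move=> ij Hq X; set S := X :\: [set i; j].
have hi : i \notin S by rewrite !inE eqxx.
have hj : j \notin S by rewrite !inE eqxx orbT.
have [h1 h2 h3 h4] := Hq S hi hj.
case Hi: (i \in X); case Hj: (j \in X) => /=.
- have XE : X = i |: (j |: S); last by rewrite {1}XE h1.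
  apply/setP=> x; rewrite !inE; by case: (eqVneq x i) => [->|] /=; rewrite ?Hi ?Hj ?(negbTE ij) //; case: (eqVneq x j) => [->|] /=; rewrite ?Hi ?Hj //; case: (x \in X).
- have -> : X = i |: S; last by rewrite h2.
  apply/setP=> x; rewrite !inE; by case: (eqVneq x i) => [->|] /=; rewrite ?Hi ?Hj ?(negbTE ij) //; case: (eqVneq x j) => [->|] /=; rewrite ?Hi ?Hj //; case: (x \in X).
- have -> : X = j |: S; last by rewrite h3.
  apply/setP=> x; rewrite !inE; by case: (eqVneq x i) => [->|] /=; rewrite ?Hi ?Hj ?(negbTE ij) //; case: (eqVneq x j) => [->|] /=; rewrite ?Hi ?Hj //; case: (x \in X).
- have -> : X = S; last by rewrite h4.
  apply/setP=> x; rewrite !inE; by case: (eqVneq x i) => [->|] /=; rewrite ?Hi ?Hj ?(negbTE ij) //; case: (eqVneq x j) => [->|] /=; rewrite ?Hi ?Hj //; case: (x \in X).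
Qed.

Theorem theorem7 (n : nat) (W Wh : game n) (i j : 'I_n) :
  monotonic W -> i != j ->
  asym_recip_strong_yes_quarrel W Wh i j ->
  quasi_monotonic Wh.
Proof.
move=> Hm ij Hq S HS T /properP [TS _].
have E := @whE n W Wh i j ij Hq.
have mono : forall A B : {set 'I_n}, A \subset B -> B \notin W -> A \notin W.
  by move=> A B AB; apply: contra; exact: Hm.
move: HS; rewrite E => HS.
case HT: ((i \in T) && (j \in T)).
- exists set0; rewrite cards0 setD0 E HT; split=> //.
  have HS' : (i \in S) && (j \in S).
    by case/andP: HT => a b; rewrite (subsetP TS _ a) (subsetP TS _ b).
  rewrite HS' in HS; apply: (mono _ _ _ HS); exact: setSD.
case HS2: ((i \in S) && (j \in S)); rewrite HS2 in HS.
- case Hi: (i \in T).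
  + exists [set i]; rewrite cards1; split=> //.
    have Hj : j \notin T by move: HT; rewrite Hi /= => ->.
    rewrite E !inE eqxx /=.
    apply: (mono _ _ _ HS); apply/subsetP=> x; rewrite !inE => /andP [xi xT].
    rewrite (negbTE xi) (subsetP TS _ xT) andbT /=; apply/eqP=> xj; move: Hj; by rewrite -xj xT.
  + exists [set j]; rewrite cards1; split=> //.
    rewrite E !inE Hi /=.
    rewrite andbF /=.
    apply: (mono _ _ _ HS); apply/subsetP=> x; rewrite !inE => /andP [xj xT].
    rewrite (negbTE xj) (subsetP TS _ xT) andbT orbF; apply/eqP=> xi; move: Hi; by rewrite -xi xT.
- exists set0; rewrite cards0 setD0 E HT; split=> //; exact: (mono _ _ TS HS).
Qed.
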